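(* There is exactly one subset $\mathcal{U}\subseteq\mathbb{P}_2(3)$ with $|\mathcal{U}|=2^3$ that is an equidistant linear code (for some choice of the addition $\boxplus$).
   Context: $\mathbb{P}_2(3)$ denotes the set of all subspaces of $\mathbb{F}_2^3$. For subspaces $X,Y$ the subspace distance is $d_S(X,Y)=\dim X+\dim Y-2\dim(X\cap Y)$. A linear code in $\mathbb{P}_q(n)$ is a subset $\mathcal{U}\subseteq\mathbb{P}_q(n)$ with $\{0\}\in\mathcal{U}$ for which there exists a map $\boxplus:\mathcal{U}\times\mathcal{U}\to\mathcal{U}$ such that (i) $(\mathcal{U},\boxplus)$ is an abelian group; (ii) its identity element is $\{0\}$; (iii) $X\boxplus X=\{0\}$ for all $X\in\mathcal{U}$; (iv) $d_S(Y_1\boxplus X,Y_2\boxplus X)=d_S(Y_1,Y_2)$ for all $Y_1,Y_2,X\in\mathcal{U}$. It is equidistant if there is $r$ with $d_S(X,Y)=r$ for all distinct $X,Y\in\mathcal{U}$. *)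

(* Defs.v *)
From mathcomp Require Import all_boot all_algebra finmap.
Set Implicit Arguments. Unset Strict Implicit. Unset Printing Implicit Defensive.
Local Open Scope ring_scope.
Local Open Scope fset_scope.

Definition subsp (F : fieldType) (n : nat) := {vspace 'rV[F]_n}.

Definition dS (F : fieldType) (n : nat) (X Y : subsp F n) : nat :=
  (\dim X + \dim Y - 2 * \dim (X :&: Y)%VS)%N.

Definition linear_code_op (F : fieldType) (n : nat) (U : {fset subsp F n})
    (op : subsp F n -> subsp F n -> subsp F n) : Prop :=
  (forall X Y, X \in U -> Y \in U -> op X Y \in U) /\
      (forall X Y Z, X \in U -> Y \in U -> Z \in U -> op X (op Y Z) = op (op X Y) Z) /\
      (forall X Y, X \in U -> Y \in U -> op X Y = op Y X) /\
      (forall X, X \in U -> op 0%VS X = X /\ op X 0%VS = X) /\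
      (forall X, X \in U -> exists2 Y, Y \in U & op X Y = 0%VS) /\
      (forall X, X \in U -> op X X = 0%VS) /\
      (forall Y1 Y2 X, Y1 \in U -> Y2 \in U -> X \in U ->
          dS (op Y1 X) (op Y2 X) = dS Y1 Y2).

Definition linear_code (F : fieldType) (n : nat) (U : {fset subsp F n}) : Prop :=
  (0%VS : subsp F n) \in U /\ exists op, linear_code_op U op.

Definition equidistant (F : fieldType) (n : nat) (U : {fset subsp F n}) : Prop :=
  exists r : nat, forall X Y, X \in U -> Y \in U -> X != Y -> dS X Y = r.

(* Main.v *)
Require Import Defs.
From mathcomp Require Import all_boot all_algebra finmap zify.
Import GRing.Theory.
Local Open Scope ring_scope.

Notation V := 'rV['F_2]_3.
Notation SP := (subsp 'F_2 3).

Lemma F2 (a b : 'F_2) : (a == 0) = (b == 0) -> a = b.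
Proof. move: a b => [[|[|//]] ?] [[|[|//]] ?] //= _; exact: val_inj. Qed.
Lemma F2a (a : 'F_2) : a + a = 0.
Proof. move: a => [[|[|//]] ?]; exact: val_inj. Qed.

Definition fv (v : V) : 'Hom(V, 'rV['F_2]_1) := linfun (mulmxr v^T).
Definition P (v : V) : SP := lker (fv v).

Lemma memP v x : (x \in P v) = (x *m v^T == 0).
Proof. by rewrite /P memv_ker lfunE. Qed.

Lemma mx11_eq0 (m : 'M['F_2]_1) : (m == 0) = (m 0 0 == 0).
Proof.
apply/eqP/eqP => [->|h]; first by rewrite mxE.
by apply/matrixP=> i j; rewrite !ord1 h mxE.
Qed.

Lemma P_inj : injective P.
Proof.
move=> v w E.
have H (x : V) : x *m v^T = x *m w^T.
  have := memP v x; rewrite E memP !mx11_eq0 => e.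
  by apply/matrixP=> i j; rewrite !ord1; apply: F2.
apply/rowP => i; have := H (delta_mx 0 i); rewrite -!rowE.
by move/(congr1 (fun m : 'M['F_2]_1 => m 0 0)); rewrite !mxE.
Qed.

Lemma dim_full : \dim (fullv : SP) = 3%N.
Proof. by rewrite dimvf dim_matrix. Qed.

Lemma dimP v : v != 0 -> \dim (P v) = 2%N.
Proof.
move=> nz.
have := limg_ker_dim (fv v) fullv; rewrite capfv dim_full.
have [i Hi] : exists i, v 0 i != 0.
  case: (pickP (fun i => v 0 i != 0)) => [i Hi|H]; first by exists i.
  by case/eqP: nz; apply/rowP => i; rewrite mxE; move: (H i) => /negbFE/eqP.
have le1 : (\dim (fv v @: fullv) <= 1)%N.
  by apply: leq_trans (dimvS (subvf _)) _; rewrite dimvf dim_matrix.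
have gt0 : (0 < \dim (fv v @: fullv))%N.
  rewrite lt0n dimv_eq0; apply/eqP => E.
  have := memv_img (fv v) (memvf (delta_mx 0 i : V)).
  rewrite E memv0 lfunE /= -rowE mx11_eq0 !mxE.
  by rewrite (negbTE Hi).
have e1 : \dim (limg (fv v)) = 1%N by apply/eqP; rewrite eqn_leq le1 gt0.
by rewrite /P e1 addn1 => -[].
Qed.

Lemma dimS3 (X : SP) : (\dim X <= 3)%N.
Proof. by have := dimvS (subvf X); rewrite dim_full. Qed.

Lemma plane_P (X : SP) : \dim X = 2%N -> exists2 v, v != 0 & X = P v.
Proof.
move=> dX.
set b := (vbasis X : seq V).
have sb : size b = 2%N by rewrite /b size_tuple.
pose M : 'M['F_2]_(3, 2) := \matrix_(i, j) (b`_j) 0 i.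
have : kermx M != 0.
  rewrite -mxrank_eq0 mxrank_ker.
  by have := rank_leq_col M; lia.
have [i Hi|H] := pickP (fun i => row i (kermx M) != 0); last first.
  case/eqP; apply/row_matrixP => i; rewrite row0; exact/eqP/negbFE/H.
move=> _; set v := row i (kermx M).
have vM : v *m M = 0 by rewrite /v -row_mul mulmx_ker row0.
have sub : (X <= P v)%VS.
  rewrite -(span_basis (vbasisP X)); apply/span_subvP => x xb.
  have xi : (index x b < 2)%N by have := xb; rewrite -index_mem sb.
  have -> : x = b`_(Ordinal xi) by rewrite /= nth_index.
  rewrite memP mx11_eq0; move/matrixP: vM => /(_ 0 (Ordinal xi)).
  rewrite !mxE => e; apply/eqP; rewrite -[RHS]e; apply: eq_bigr => k _; rewrite !mxE mulrC.
  done.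
exists v => //.
apply/eqP; rewrite -(dimv_leqif_eq sub) dX dimP //.
Qed.

Definition Q (v : V) : SP := if v == 0 then 0%VS else P v.

Lemma Q0 : Q 0 = 0%VS. Proof. by rewrite /Q eqxx. Qed.

Lemma dimQ v : v != 0 -> \dim (Q v) = 2%N.
Proof. by move=> nz; rewrite /Q (negbTE nz) dimP. Qed.

Lemma Q_inj : injective Q.
Proof.
move=> v w; rewrite /Q.
case: eqP => [->|/eqP nv]; case: eqP => [->|/eqP nw].
- by [].
- by move=> E; have := dimP _ nw; rewrite -E dimv0.
- by move=> E; have := dimP _ nv; rewrite E dimv0.
- exact: P_inj.
Qed.

Definition U0 : {fset SP} := [fset Q v | v in V]%fset.

Lemma U0P X : reflect (exists v, X = Q v) (X \in U0).
Proof.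
apply: (iffP (imfsetP _ _ _ _)) => [[v _ ->]|[v ->]]; first by exists v.
by exists v.
Qed.

Lemma U0_dim X : X \in U0 -> X = 0%VS \/ \dim X = 2%N.
Proof.
case/U0P => v ->; have [->|nz] := eqVneq v 0; first by left; rewrite Q0.
by right; rewrite dimQ.
Qed.

Lemma dim_U0 X : X = 0%VS \/ \dim X = 2%N -> X \in U0.
Proof.
case=> [->|/plane_P [v nz ->]]; apply/U0P; first by exists 0; rewrite Q0.
by exists v; rewrite /Q (negbTE nz).
Qed.

Lemma card_U0 : #|` U0| = 8%N.
Proof. rewrite card_imfset; last exact: Q_inj. by rewrite -cardE card_mx card_ord. Qed.

Lemma dS0 (X : SP) : dS 0%VS X = \dim X.
Proof. by rewrite /dS cap0v dimv0 add0n muln0 subn0. Qed.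

Lemma dSxx (X : SP) : dS X X = 0%N.
Proof. by rewrite /dS capvv addnn -mul2n subnn. Qed.

Lemma dSC (X Y : SP) : dS X Y = dS Y X.
Proof. by rewrite /dS capvC addnC. Qed.

Lemma dS_pl (X Y : SP) : X = 0%VS \/ \dim X = 2%N -> Y = 0%VS \/ \dim Y = 2%N ->
  X != Y -> dS X Y = 2%N.
Proof.
case=> [->|dX]; case=> [->|dY] nXY.
- by case/negP: nXY; apply/eqP.
- by rewrite dS0.
- by rewrite dSC dS0.
have := dimv_sum_cap X Y; have := dimS3 (X + Y)%VS.
have l2 := dimvS (capvSl X Y).
have e2 : \dim (X :&: Y)%VS != 2%N.
  apply/eqP => e; case/eqP: nXY.
  have e1 : (X :&: Y)%VS = X by apply/eqP; rewrite eqEdim capvSl e dX leqnn.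
  have e2 : (X :&: Y)%VS = Y by apply/eqP; rewrite eqEdim capvSr e dY leqnn.
  exact: (etrans (esym e1) e2).
rewrite /dS dX dY in l2 *.
move: e2 l2; move: (\dim (X + Y)%VS) (\dim (X :&: Y)%VS) => a b.
move=> /eqP h1 h2 h3 h4; move: (b) h1 h2 h3 h4 => {}b; clear; move=> h1 h2 h3 h4; lia.
Qed.

Lemma U0_eqd (X Y : SP) : X \in U0 -> Y \in U0 -> X != Y -> dS X Y = 2%N.
Proof. by move=> /U0_dim hX /U0_dim hY; apply: dS_pl. Qed.

Lemma rowF2 (a : V) : a + a = 0.
Proof. by apply/rowP => i; rewrite !mxE F2a. Qed.

Fact qinv_key : unit. Proof. by []. Qed.
Definition qinv : SP -> V := locked_with qinv_key (fun X : SP => odflt 0 [pick v | Q v == X]).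

Lemma qinvK v : qinv (Q v) = v.
Proof.
rewrite /qinv; case: qinv_key => /=; case: pickP => [w /eqP/Q_inj -> //|H].
by move: (H v); rewrite eqxx.
Qed.

Lemma code_gen (G : zmodType) (U : {fset SP}) (q : G -> SP) (qi : SP -> G) :
  (forall a, qi (q a) = a) -> (forall a : G, a + a = 0) -> q 0 = 0%VS ->
  injective q ->
  (forall X, reflect (exists a, X = q a) (X \in U)) ->
  (forall X Y, X \in U -> Y \in U -> X != Y -> dS X Y = 2%N) ->
  linear_code_op U (fun X Y => q (qi X + qi Y)).
Proof.
move=> qK aa q0 qI UP Ueq.
have qU a : q a \in U by apply/UP; exists a.
split; [|split; [|split; [|split; [|split; [|split]]]]].
- by move=> X Y _ _; apply: qU.
- by move=> X Y Z /UP[a ->] /UP[b ->] /UP[c ->]; rewrite !qK addrA.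
- by move=> X Y _ _; rewrite addrC.
- by move=> X /UP[a ->]; rewrite -q0 !qK add0r addr0.
- move=> X /UP[a ->]; exists (q a); first exact: qU.
  by rewrite qK aa q0.
- by move=> X /UP[a ->]; rewrite qK aa q0.
move=> Y1 Y2 X /UP[b1 ->] /UP[b2 ->] /UP[a ->]; rewrite !qK.
have [->|ne] := eqVneq b1 b2; first by rewrite !dSxx.
rewrite (Ueq _ _ (qU _) (qU _)); last by apply/eqP => /qI/addIr/eqP; rewrite (negbTE ne).
rewrite (Ueq _ _ (qU _) (qU _)) //.
by apply/eqP => /qI/eqP; rewrite (negbTE ne).
Qed.

Definition op : SP -> SP -> SP := fun X Y => Q (qinv X + qinv Y).

Lemma U0_code : linear_code_op U0 op.
Proof. have h := @code_gen V U0 Q qinv qinvK. have h2 := h rowF2. have h3 := h2 Q0. have h4 := h3 Q_inj. have h5 := h4 U0P. have h6 := h5 U0_eqd. exact: h6. Qed.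

Theorem proposition1 :
  exists! U : {fset subsp 'F_2 3},
    #|` U| = (2 ^ 3)%N /\ linear_code U /\ equidistant U.
Proof.
exists U0; split.
  split; first exact: card_U0.
  split; first by split; [apply/U0P; exists 0; rewrite Q0 | exists op; exact: U0_code].
  by exists 2%N; exact: U0_eqd.
move=> U [cU [[U0in _] [r Hr]]].
have key : forall X, X \in U -> X = 0%VS \/ \dim X = 2%N.
  have c7 : #|` (U `\ 0%VS)%fset| = 7%N by move: cU; rewrite (cardfsD1 0%VS) U0in add1n => -[].
  have [X XU] : exists X, X \in (U `\ 0%VS)%fset.
    by apply/fset0Pn; apply/eqP => E; rewrite E cardfs0 in c7.
  have c6 : #|` (U `\ 0%VS `\ X)%fset| = 6%N.
    have h := cardfsD1 X (U `\ 0%VS)%fset; rewrite XU in h.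
    exact: (succn_inj (etrans (esym h) c7)).
  have [Y YU] : exists Y, Y \in (U `\ 0%VS `\ X)%fset.
    by apply/fset0Pn; apply/eqP => E; rewrite E cardfs0 in c6.
  rewrite !in_fsetD1 in XU YU.
  case/andP: XU => nX0 XU; case/and3P: YU => nYX nY0 YU.
  have dX : \dim X = r by rewrite -dS0 Hr // eq_sym.
  have dY : \dim Y = r by rewrite -dS0 Hr // eq_sym.
  have := Hr _ _ YU XU nYX; rewrite /dS dX dY.
  have := dimvS (capvSl Y X); rewrite dY.
  have := dimS3 X; rewrite dX.
  have : \dim X != 0%N by rewrite dimv_eq0.
  rewrite dX => r0 r3 kr e.
  have r2 : r = 2%N.
    move: r0 r3 kr e; move: (\dim (Y :&: X)%VS) => k; move: (r) k; clear => r k.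
    move=> /eqP ? ? ? ?; lia.
  move=> Z ZU; have [->|nZ] := eqVneq Z 0%VS; first by left.
  by right; rewrite -dS0 Hr // -?r2 // eq_sym.
have sub : (U `<=` U0)%fset by apply/fsubsetP => X /key /dim_U0.
by apply/eqP; rewrite eq_sym -(fsubset_leqif_cards sub) cU card_U0.
Qed.
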